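(* If $R$ is a semiquasitriangular structure for a Hopf algebra $H$ (with bijective antipode), then so is $\tau(R^{-1})=R^{-(2)}\otimes R^{-(1)}$, where $\tau:H\otimes H\to H\otimes H$ is the flip $\tau(h\otimes l)=l\otimes h$.
   Context: All vector spaces are over a field $k$, $\otimes=\otimes_k$. For a Hopf algebra $H$ with comultiplication $\Delta$, counit $\epsilon$, antipode $S$, we use Sweedler notation $\Delta(h)=h_1\otimes h_2$, etc. $\operatorname{Z}(H)$ is the centre of $H$. For $R\in H\otimes H$ we write $R=R^{(1)}\otimes R^{(2)}$ (summation understood); $R'^{(1)}\otimes R'^{(2)}$ denotes another copy of $R$; $R^{-1}=R^{-(1)}\otimes R^{-(2)}$. Definition (semiquasitriangular Hopf algebra): a pair $(H,R)$ with $H$ a Hopf algebra with bijective antipode and $R\in H\otimes H$ invertible such that (1) $R^{(1)}_1\otimes R^{(1)}_2\otimes R^{(2)} = R^{(1)}\otimes R'^{(1)}\otimes R^{(2)}R'^{(2)}$; (2) $R^{(1)}\otimes R^{(2)}_1\otimes R^{(2)}_2 = R^{(1)}R'^{(1)}\otimes R'^{(2)}\otimes R^{(2)}$; (3) $R^{(1)}\otimes R^{(2)}_2R'^{(1)}\otimes R^{(2)}_1R'^{(2)} = R^{(1)}\otimes R'^{(1)}R^{(2)}_1\otimes R'^{(2)}R^{(2)}_2$; (4) $R^{(1)}_2R'^{(1)}\otimes R^{(1)}_1R'^{(2)}\otimes R^{(2)} = R'^{(1)}R^{(1)}_1\otimes R'^{(2)}R^{(1)}_2\otimes R^{(2)}$;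 (5) $\nu(h):=R^{(2)}h_2R'^{(2)}\otimes S(h_1)S(R^{(1)})h_3R'^{(1)}\in H\otimes\operatorname{Z}(H)$ for all $h\in H$; (6) $\nu(h)=R^{(1)}h_2R'^{(1)}\otimes S(R'^{(2)})S(h_1)R^{(2)}h_3$ for all $h\in H$. Then $R$ is called a semiquasitriangular structure on $H$. *)

(* Defs.v *)
(* Hopf algebras over a field k, with tensors H⊗H and
   H⊗H⊗H represented by formal finite sums (lists of pairs / triples),
   equality in the tensor product being defined through the universal
   property: two formal sums are equal in H⊗H iff every bilinear map into
   every k-vector space W takes the same value on them. *)
From HB Require Import structures.
From mathcomp Require Import all_boot all_order all_algebra.
Set Implicit Arguments. Unset Strict Implicit. Unset Printing Implicit Defensive.
Import GRing.Theory.
Local Open Scope ring_scope.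

Section Tensors.
Variables (k : fieldType) (H : algType k).

Definition tens2 := seq (H * H).
Definition tens3 := seq (H * H * H).

Definition bilinear_map (W : lmodType k) (phi : H -> H -> W) : Prop :=
  forall (a : k) (x y z : H),
    phi (a *: x + y) z = a *: phi x z + phi y z /\
    phi z (a *: x + y) = a *: phi z x + phi z y.

Definition trilinear_map (W : lmodType k) (phi : H -> H -> H -> W) : Prop :=
  forall (a : k) (x y z w : H),
    [/\ phi (a *: x + y) z w = a *: phi x z w + phi y z w,
        phi z (a *: x + y) w = a *: phi z x w + phi z y w &
        phi z w (a *: x + y) = a *: phi z w x + phi z w y].

Definition teq2 (s t : tens2) : Prop :=
  forall (W : lmodType k) (phi : H -> H -> W), bilinear_map phi ->
    \sum_(p <- s) phi p.1 p.2 = \sum_(p <- t) phi p.1 p.2.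

Definition teq3 (s t : tens3) : Prop :=
  forall (W : lmodType k) (phi : H -> H -> H -> W), trilinear_map phi ->
    \sum_(p <- s) phi p.1.1 p.1.2 p.2 = \sum_(p <- t) phi p.1.1 p.1.2 p.2.

Definition tmul (s t : tens2) : tens2 :=
  [seq (p.1 * q.1, p.2 * q.2) | p <- s, q <- t].

Definition tone : tens2 := [:: (1, 1)].

Definition tflip (s : tens2) : tens2 := [seq (p.2, p.1) | p <- s].

Definition central (x : H) : Prop := forall y : H, y * x = x * y.

Definition in_H_tensor_Z (t : tens2) : Prop :=
  exists s : tens2, (forall p, p \in s -> central p.2) /\ teq2 t s.

(* Hopf algebra structure (Delta, epsilon, S) on the k-algebra H;
   Delta h is a chosen formal sum  h_1 ⊗ h_2. *)
Definition is_hopf (D : H -> tens2) (eps : H -> k) (S : H -> H) : Prop :=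
      (forall (a : k) (x y : H),
        teq2 (D (a *: x + y)) ([seq (a *: p.1, p.2) | p <- D x] ++ D y)) /\
      (forall h : H,
        teq3 [seq (q.1, q.2, p.2) | p <- D h, q <- D p.1]
             [seq (p.1, q.1, q.2) | p <- D h, q <- D p.2]) /\
      (forall h : H, \sum_(p <- D h) eps p.1 *: p.2 = h /\
                    \sum_(p <- D h) eps p.2 *: p.1 = h) /\
      (forall x y : H, teq2 (D (x * y)) (tmul (D x) (D y))) /\ teq2 (D 1) tone /\
      [/\ forall (a : k) (x y : H), eps (a *: x + y) = a * eps x + eps y,
          forall x y : H, eps (x * y) = eps x * eps y & eps 1 = 1] /\
      (forall (a : k) (x y : H), S (a *: x + y) = a *: S x + S y) /\
      (forall h : H, \sum_(p <- D h) S p.1 * p.2 = eps h *: 1 /\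
                    \sum_(p <- D h) p.1 * S p.2 = eps h *: 1).

Definition D2 (D : H -> tens2) (h : H) : tens3 :=
  [seq (q.1, q.2, p.2) | p <- D h, q <- D p.1].

(* nu(h) = R^(2) h_2 R'^(2) ⊗ S(h_1) S(R^(1)) h_3 R'^(1) *)
Definition nu (D : H -> tens2) (S : H -> H) (R : tens2) (h : H) : tens2 :=
  [seq (p.2 * xr.1.1.2 * xr.2.2, S xr.1.1.1 * S p.1 * xr.1.2 * xr.2.1)
     | p <- R, xr <- [seq (x, r) | x <- D2 D h, r <- R]].

(* R^(1) h_2 R'^(1) ⊗ S(R'^(2)) S(h_1) R^(2) h_3 *)
Definition nu' (D : H -> tens2) (S : H -> H) (R : tens2) (h : H) : tens2 :=
  [seq (p.1 * xr.1.1.2 * xr.2.1, S xr.2.2 * S xr.1.1.1 * p.2 * xr.1.2)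
     | p <- R, xr <- [seq (x, r) | x <- D2 D h, r <- R]].

Definition semiquasitriangular (D : H -> tens2) (S : H -> H) (R : tens2) : Prop :=
  (exists Ri : tens2, teq2 (tmul R Ri) tone /\ teq2 (tmul Ri R) tone) /\
  (* (1) *)
  teq3 [seq (q.1, q.2, p.2) | p <- R, q <- D p.1]
       [seq (p.1, q.1, p.2 * q.2) | p <- R, q <- R] /\
  (* (2) *)
  teq3 [seq (p.1, q.1, q.2) | p <- R, q <- D p.2]
       [seq (p.1 * q.1, q.2, p.2) | p <- R, q <- R] /\
  (* (3) *)
  teq3 [seq (p.1, qr.1.2 * qr.2.1, qr.1.1 * qr.2.2)
          | p <- R, qr <- [seq (q, r) | q <- D p.2, r <- R]]
       [seq (p.1, qr.2.1 * qr.1.1, qr.2.2 * qr.1.2)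
          | p <- R, qr <- [seq (q, r) | q <- D p.2, r <- R]] /\
  (* (4) *)
  teq3 [seq (qr.1.2 * qr.2.1, qr.1.1 * qr.2.2, p.2)
          | p <- R, qr <- [seq (q, r) | q <- D p.1, r <- R]]
       [seq (qr.2.1 * qr.1.1, qr.2.2 * qr.1.2, p.2)
          | p <- R, qr <- [seq (q, r) | q <- D p.1, r <- R]] /\
  (* (5) *)
  (forall h : H, in_H_tensor_Z (nu D S R h)) /\
  (* (6) *)
  (forall h : H, teq2 (nu D S R h) (nu' D S R h)).

End Tensors.

(* Main.v *)
Require Import Defs.
From HB Require Import structures.
From mathcomp Require Import all_boot all_order all_algebra.
Set Implicit Arguments. Unset Strict Implicit. Unset Printing Implicit Defensive.
Import GRing.Theory.
Local Open Scope ring_scope.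

Section Lin.
Variables (k : fieldType) (H : algType k).

Definition linf (W : lmodType k) (f : H -> W) :=
  forall (a : k) (x y : H), f (a *: x + y) = a *: f x + f y.

Lemma linf0 (W : lmodType k) (f : H -> W) : linf f -> f 0 = 0.
Proof. move=> lf; have E := lf 1 0 0; rewrite scale1r !addr0 in E.
rewrite scale1r in E.
by apply/eqP; rewrite -(subrr (f 0)) {2}E addrK. Qed.

Lemma linfD (W : lmodType k) (f : H -> W) : linf f -> forall x y, f (x + y) = f x + f y.
Proof. by move=> lf x y; have := lf 1 x y; rewrite !scale1r. Qed.

Lemma linfZ (W : lmodType k) (f : H -> W) : linf f -> forall a x, f (a *: x) = a *: f x.
Proof. by move=> lf a x; rewrite -[a *: x]addr0 lf (linf0 lf) addr0. Qed.

Lemma linf_sum (W : lmodType k) (f : H -> W) : linf f -> forall I (s : seq I) (g : I -> H),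
  f (\sum_(i <- s) g i) = \sum_(i <- s) f (g i).
Proof.
move=> lf I s g; elim: s => [|x s IH]; first by rewrite !big_nil (linf0 lf).
by rewrite !big_cons (linfD lf) IH.
Qed.

Lemma lin_id : linf (fun x : H => x).
Proof. by []. Qed.

Lemma lin_mull (u : H) (g : H -> H) : linf g -> linf (fun x => u * g x).
Proof. by move=> lg a x y; rewrite lg mulrDr scalerAr. Qed.

Lemma lin_mulr (u : H) (g : H -> H) : linf g -> linf (fun x => g x * u).
Proof. by move=> lg a x y; rewrite lg mulrDl scalerAl. Qed.

Lemma lin_sum (W : lmodType k) I (s : seq I) (F : I -> H -> W) :
  (forall i, linf (F i)) -> linf (fun x => \sum_(i <- s) F i x).
Proof.
move=> lF a x y; rewrite scaler_sumr -big_split /=.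
by apply: eq_bigr => i _; rewrite lF.
Qed.

Lemma lin_scale (W : lmodType k) (c : k) (f : H -> W) : linf f -> linf (fun x => c *: f x).
Proof. by move=> lf a x y; rewrite lf scalerDr !scalerA mulrC. Qed.

Lemma bil_of_lin (W : lmodType k) (phi : H -> H -> W) :
  (forall z, linf (fun x => phi x z)) -> (forall z, linf (fun y => phi z y)) ->
  bilinear_map phi.
Proof. by move=> l1 l2 a x y z; split; [apply: l1|apply: l2]. Qed.

Lemma tri_of_lin (W : lmodType k) (phi : H -> H -> H -> W) :
  (forall z w, linf (fun x => phi x z w)) -> (forall z w, linf (fun y => phi z y w)) ->
  (forall z w, linf (fun y => phi z w y)) -> trilinear_map phi.
Proof. by move=> l1 l2 l3 a x y z w; split; [apply: l1|apply: l2|apply: l3]. Qed.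

Lemma lin_bil1 (W : lmodType k) (phi : H -> H -> W) (z : H) (g : H -> H) :
  bilinear_map phi -> linf g -> linf (fun x => phi (g x) z).
Proof. by move=> bp lg a x y; rewrite lg; case: (bp a (g x) (g y) z). Qed.

Lemma lin_bil2 (W : lmodType k) (phi : H -> H -> W) (z : H) (g : H -> H) :
  bilinear_map phi -> linf g -> linf (fun x => phi z (g x)).
Proof. by move=> bp lg a x y; rewrite lg; case: (bp a (g x) (g y) z). Qed.

Lemma lin_tri1 (W : lmodType k) (phi : H -> H -> H -> W) (z w : H) (g : H -> H) :
  trilinear_map phi -> linf g -> linf (fun x => phi (g x) z w).
Proof. by move=> bp lg a x y; rewrite lg; case: (bp a (g x) (g y) z w). Qed.

Lemma lin_tri2 (W : lmodType k) (phi : H -> H -> H -> W) (z w : H) (g : H -> H) :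
  trilinear_map phi -> linf g -> linf (fun x => phi z (g x) w).
Proof. by move=> bp lg a x y; rewrite lg; case: (bp a (g x) (g y) z w). Qed.

Lemma lin_tri3 (W : lmodType k) (phi : H -> H -> H -> W) (z w : H) (g : H -> H) :
  trilinear_map phi -> linf g -> linf (fun x => phi z w (g x)).
Proof. by move=> bp lg a x y; rewrite lg; case: (bp a (g x) (g y) z w). Qed.

End Lin.

Section Main.
Variables (k : fieldType) (H : algType k).
Variables (D : H -> tens2 H) (eps : H -> k) (S Si : H -> H).
Hypothesis HDlin : forall (a : k) (x y : H),
        teq2 (D (a *: x + y)) ([seq (a *: p.1, p.2) | p <- D x] ++ D y).
Hypothesis Hcoass : forall h : H,
        teq3 [seq (q.1, q.2, p.2) | p <- D h, q <- D p.1]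
             [seq (p.1, q.1, q.2) | p <- D h, q <- D p.2].
Hypothesis Hcu1 : forall h : H, \sum_(p <- D h) eps p.1 *: p.2 = h.
Hypothesis Hcu2 : forall h : H, \sum_(p <- D h) eps p.2 *: p.1 = h.
Hypothesis HDmul : forall x y : H, teq2 (D (x * y)) (tmul (D x) (D y)).
Hypothesis HD1 : teq2 (D 1) (tone H).
Hypothesis Heps_lin : forall (a : k) (x y : H), eps (a *: x + y) = a * eps x + eps y.
Hypothesis Heps_mul : forall x y : H, eps (x * y) = eps x * eps y.
Hypothesis Heps1 : eps 1 = 1.
Hypothesis HSlin : forall (a : k) (x y : H), S (a *: x + y) = a *: S x + S y.
Hypothesis Hant1 : forall h : H, \sum_(p <- D h) S p.1 * p.2 = eps h *: 1.
Hypothesis Hant2 : forall h : H, \sum_(p <- D h) p.1 * S p.2 = eps h *: 1.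
Hypothesis HSSi : cancel Si S.
Hypothesis HSiS : cancel S Si.

Lemma linS : linf S. Proof. exact: HSlin. Qed.

Lemma linSi : linf Si.
Proof. by move=> a x y; apply: (can_inj HSiS); rewrite HSSi HSlin !HSSi. Qed.

Lemma lin_S (g : H -> H) : linf g -> linf (fun x => S (g x)).
Proof. by move=> lg a x y; rewrite lg linS. Qed.

Lemma lin_Si (g : H -> H) : linf g -> linf (fun x => Si (g x)).
Proof. by move=> lg a x y; rewrite lg linSi. Qed.

Lemma lin_eps (W : lmodType k) (w : W) (g : H -> H) :
  linf g -> linf (fun x => eps (g x) *: w).
Proof. by move=> lg a x y; rewrite lg Heps_lin scalerDl scalerA. Qed.

Lemma sum_cat2 (W : lmodType k) (phi : H -> H -> W) s t :
  \sum_(p <- s ++ t) phi p.1 p.2 = \sum_(p <- s) phi p.1 p.2 + \sum_(p <- t) phi p.1 p.2.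
Proof. by rewrite big_cat. Qed.

Lemma sum_pair (W : lmodType k) (G : H * H -> W) (s : seq (H * H)) :
  \sum_(p <- s) G (p.1, p.2) = \sum_(p <- s) G p.
Proof. by apply: eq_bigr => -[]. Qed.

Lemma lin_Dsum (W : lmodType k) (G : H * H -> W) (g : H -> H) :
  bilinear_map (fun a b => G (a, b)) -> linf g -> linf (fun x => \sum_(q <- D (g x)) G q).
Proof.
move=> bG lg a x y /=; rewrite lg.
have := HDlin a (g x) (g y) bG; rewrite /= !sum_pair => ->.
rewrite big_cat big_map /=.
rewrite scaler_sumr; congr (_ + _); apply: eq_bigr => q _.
have [+ _] := bG a q.1 0 q.2; rewrite !addr0 -surjective_pairing => ->.
by rewrite (linf0 (lin_bil1 q.2 bG (@lin_id _ _))) addr0.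
Qed.

Ltac lin1 := first [ exact: lin_id
  | apply: lin_sum => ?
  | apply: lin_Dsum
  | apply: lin_S | apply: lin_Si | apply: lin_eps | apply: lin_scale
  | apply: lin_mull | apply: lin_mulr
  | match goal with Hb : bilinear_map ?phi |- _ =>
      first [apply: (lin_bil1 _ Hb) | apply: (lin_bil2 _ Hb)] end
  | match goal with Hb : trilinear_map ?phi |- _ =>
      first [apply: (lin_tri1 _ _ Hb) | apply: (lin_tri2 _ _ Hb) | apply: (lin_tri3 _ _ Hb)] end
  | apply: bil_of_lin => ? /=
  | apply: tri_of_lin => ? ? /= ].
Ltac lin := repeat lin1.

Lemma sum_tmul (W : lmodType k) (phi : H -> H -> W) s t :
  \sum_(p <- tmul s t) phi p.1 p.2 = \sum_(p <- s) \sum_(q <- t) phi (p.1 * q.1) (p.2 * q.2).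
Proof. by rewrite /tmul big_allpairs_dep. Qed.

Lemma sum_tone (W : lmodType k) (phi : H -> H -> W) :
  \sum_(p <- tone H) phi p.1 p.2 = phi 1 1.
Proof. by rewrite big_seq1. Qed.

Lemma lin_sumZ (W : lmodType k) (f : H -> W) I (s : seq I) (c : I -> k) (x : I -> H) :
  linf f -> \sum_(i <- s) c i *: f (x i) = f (\sum_(i <- s) c i *: x i).
Proof. by move=> lf; rewrite (linf_sum lf); apply: eq_bigr => i _; rewrite (linfZ lf). Qed.

Lemma test (W : lmodType k) (phi : H -> H -> W) (u : H) (Hb : bilinear_map phi) :
  bilinear_map (fun x y => \sum_(q <- D (u * x)) phi (q.1 * y) (S q.2) ).
Proof. lin. Qed.


Variables (R Ri : tens2 H).
Hypothesis HRRi : teq2 (tmul R Ri) (tone H).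
Hypothesis HRiR : teq2 (tmul Ri R) (tone H).
Hypothesis HR1 : teq3 [seq (q.1, q.2, p.2) | p <- R, q <- D p.1]
       [seq (p.1, q.1, p.2 * q.2) | p <- R, q <- R].
Hypothesis HR3 : teq3 [seq (p.1, qr.1.2 * qr.2.1, qr.1.1 * qr.2.2)
          | p <- R, qr <- [seq (q, r) | q <- D p.2, r <- R]]
       [seq (p.1, qr.2.1 * qr.1.1, qr.2.2 * qr.1.2)
          | p <- R, qr <- [seq (q, r) | q <- D p.2, r <- R]].
Hypothesis HR4 : teq3 [seq (qr.1.2 * qr.2.1, qr.1.1 * qr.2.2, p.2)
          | p <- R, qr <- [seq (q, r) | q <- D p.1, r <- R]]
       [seq (qr.2.1 * qr.1.1, qr.2.2 * qr.1.2, p.2)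
          | p <- R, qr <- [seq (q, r) | q <- D p.1, r <- R]].
Hypothesis HR2 : teq3 [seq (p.1, q.1, q.2) | p <- R, q <- D p.2]
       [seq (p.1 * q.1, q.2, p.2) | p <- R, q <- R].

Lemma F1 : \sum_(p <- R) eps p.1 *: p.2 = 1.
Proof.
set u := \sum_(p <- R) eps p.1 *: p.2.
have A : forall (W : lmodType k) (phi : H -> H -> W), bilinear_map phi ->
  \sum_(p <- R) phi p.1 p.2 = \sum_(p <- R) phi p.1 (u * p.2).
  move=> W phi bp.
  have := @HR1 _ (fun x y z => eps x *: phi y z) ltac:(lin).
  rewrite !big_allpairs_dep /=.
  have -> : \sum_(i1 <- R) \sum_(i2 <- D i1.1) eps i2.1 *: phi i2.2 i1.2 =
            \sum_(p <- R) phi p.1 p.2.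
    apply: eq_bigr => p _; rewrite (lin_sumZ (f := fun x => phi x p.2)) ?Hcu1 //; lin.
  move=> ->; rewrite exchange_big /=; apply: eq_bigr => q _.
  rewrite /u (lin_sumZ (f := fun x => phi q.1 x)); last by lin.
  by rewrite mulr_suml; congr (phi _ _); apply: eq_bigr => p _; rewrite scalerAl.
have := A _ (fun x y => \sum_(t <- Ri) eps (x * t.1) *: (y * t.2)) ltac:(lin).
have E : forall v : H, \sum_(p <- R) \sum_(t <- Ri) eps (p.1 * t.1) *: (v * (p.2 * t.2)) = v.
  move=> v.
  have := @HRRi _ (fun x y => eps x *: (v * y)) ltac:(lin).
  by rewrite (sum_tmul (fun x y => eps x *: (v * y))) /tone big_seq1 /= Heps1 scale1r mulr1.
have := E 1; have := E u.
under eq_bigr => p _ do under eq_bigr => t _ do rewrite mulrA.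
under [in X in _ -> X -> _]eq_bigr => p _ do under eq_bigr => t _ do rewrite mul1r.
by move=> -> ->.
Qed.


Lemma coassE (W : lmodType k) (F : H -> H -> H -> W) : trilinear_map F -> forall h,
  \sum_(p <- D h) \sum_(q <- D p.1) F q.1 q.2 p.2 = \sum_(p <- D h) \sum_(q <- D p.2) F p.1 q.1 q.2.
Proof. by move=> tF h; have := Hcoass h tF; rewrite !big_allpairs_dep. Qed.

Lemma DmulE (W : lmodType k) (psi : H -> H -> W) : bilinear_map psi -> forall x y,
  \sum_(p <- D x) \sum_(q <- D y) psi (p.1 * q.1) (p.2 * q.2) = \sum_(w <- D (x * y)) psi w.1 w.2.
Proof. by move=> bp x y; rewrite (HDmul x y bp) sum_tmul. Qed.

Lemma S1 : S 1 = 1.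
Proof.
have := Hant1 1; rewrite Heps1 scale1r.
have := @HD1 _ (fun x y => S x * y) ltac:(lin); rewrite /tone big_seq1 /= mulr1 => ->.
by [].
Qed.

Lemma Santi x y : S (x * y) = S y * S x.
Proof.
have E2 : forall u v, \sum_(p' <- D u) \sum_(q' <- D v) p'.1 * q'.1 * S q'.2 * S p'.2
    = (eps u * eps v) *: (1 : H).
  move=> u v.
  transitivity (\sum_(p' <- D u) p'.1 * (\sum_(q' <- D v) q'.1 * S q'.2) * S p'.2).
    apply: eq_bigr => p' _; rewrite mulr_sumr mulr_suml; apply: eq_bigr => q' _.
    by rewrite !mulrA.
  under eq_bigr do rewrite Hant2 -scalerAr -scalerAl mulr1.
  by rewrite -scaler_sumr Hant2 scalerA mulrC.
transitivity (\sum_(p <- D x) \sum_(q <- D y) (eps p.2 * eps q.2) *: S (p.1 * q.1)).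
  rewrite -{1}(Hcu2 x) -{1}(Hcu2 y) mulr_suml (linf_sum linS); apply: eq_bigr => p _.
  rewrite mulr_sumr (linf_sum linS); apply: eq_bigr => q _.
  by rewrite -scalerAl -scalerAr !(linfZ linS) scalerA.
transitivity (\sum_(p <- D x) \sum_(p' <- D p.2) \sum_(q <- D y) \sum_(q' <- D q.2)
    S (p.1 * q.1) * (p'.1 * q'.1 * S q'.2 * S p'.2)).
  apply: eq_bigr => p _; rewrite exchange_big; apply: eq_bigr => q _.
  rewrite -(mulr1 (S _)) scalerAr -E2 mulr_sumr; apply: eq_bigr => p' _.
  by rewrite mulr_sumr mulr1.
transitivity (\sum_(p <- D x) \sum_(p' <- D p.2) \sum_(q <- D y) \sum_(q' <- D q.1)
    S (p.1 * q'.1) * (p'.1 * q'.2 * S q.2 * S p'.2)).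
  apply: eq_bigr => p _; apply: eq_bigr => p' _; symmetry.
  exact: (coassE (F := fun a b c => S (p.1 * a) * (p'.1 * b * S c * S p'.2)) ltac:(lin)).
transitivity (\sum_(p <- D x) \sum_(p' <- D p.1) \sum_(q <- D y) \sum_(q' <- D q.1)
    S (p'.1 * q'.1) * (p'.2 * q'.2 * S q.2 * S p.2)).
  symmetry.
  exact: (coassE (F := fun a b c => \sum_(q <- D y) \sum_(q' <- D q.1)
       S (a * q'.1) * (b * q'.2 * S q.2 * S c)) ltac:(lin)).
transitivity (\sum_(p <- D x) \sum_(q <- D y) (eps p.1 * eps q.1) *: (S q.2 * S p.2)).
  apply: eq_bigr => p _; rewrite exchange_big; apply: eq_bigr => q _.
  rewrite (DmulE (psi := fun a b => S a * (b * S q.2 * S p.2)) ltac:(lin)).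
  transitivity ((\sum_(w <- D (p.1 * q.1)) S w.1 * w.2) * (S q.2 * S p.2)).
    by rewrite mulr_suml; apply: eq_bigr => w _; rewrite !mulrA.
  by rewrite Hant1 -scalerAl mul1r Heps_mul.
rewrite -{2}(Hcu1 x) -{2}(Hcu1 y) !(linf_sum linS) mulr_sumr; apply: eq_bigr => p _.
rewrite mulr_suml; apply: eq_bigr => q _.
by rewrite !(linfZ linS) -scalerAl -scalerAr scalerA mulrC.
Qed.


Lemma teq2_sym (A B : tens2 H) : teq2 A B -> teq2 B A.
Proof. by move=> h W phi bp; rewrite (h _ _ bp). Qed.

Lemma teq2_trans (A B C : tens2 H) : teq2 A B -> teq2 B C -> teq2 A C.
Proof. by move=> h1 h2 W phi bp; rewrite (h1 _ _ bp) (h2 _ _ bp). Qed.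

Lemma tmul_one (A B : tens2 H) : teq2 (tmul A B) (tone H) ->
  forall (W : lmodType k) (phi : H -> H -> W), bilinear_map phi ->
  \sum_(a <- A) \sum_(b <- B) phi (a.1 * b.1) (a.2 * b.2) = phi 1 1.
Proof. by move=> h W phi bp; rewrite -sum_tmul (h _ _ bp) /tone big_seq1. Qed.

Lemma linv2 (A B C : tens2 H) :
  teq2 (tmul A B) (tone H) -> teq2 (tmul B C) (tone H) -> teq2 A C.
Proof.
move=> hAB hBC W phi bp.
have e1 := tmul_one hBC (phi := fun x y => \sum_(a <- A) phi (a.1 * x) (a.2 * y)) ltac:(lin).
under [LHS]eq_bigr do rewrite -[_.1]mulr1 -[_.2]mulr1.
rewrite -e1.
transitivity (\sum_(c <- C) \sum_(a <- A) \sum_(b <- B)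
   phi (a.1 * b.1 * c.1) (a.2 * b.2 * c.2)).
  rewrite exchange_big; apply: eq_bigr => b _; rewrite exchange_big.
  by apply: eq_bigr => c _; apply: eq_bigr => a _; rewrite !mulrA.
apply: eq_bigr => c _.
have e2 := tmul_one hAB (phi := fun x y => phi (x * c.1) (y * c.2)) ltac:(lin).
by rewrite /= !mul1r in e2.
Qed.


Lemma F1' : \sum_(p <- R) eps p.2 *: p.1 = 1.
Proof.
set u := \sum_(p <- R) eps p.2 *: p.1.
have A : forall (W : lmodType k) (phi : H -> H -> W), bilinear_map phi ->
  \sum_(p <- R) phi p.1 p.2 = \sum_(p <- R) phi (p.1 * u) p.2.
  move=> W phi bp.
  have := @HR2 _ (fun x y z => eps y *: phi x z) ltac:(lin).
  rewrite !big_allpairs_dep /=.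
  have -> : \sum_(i1 <- R) \sum_(i2 <- D i1.2) eps i2.1 *: phi i1.1 i2.2 =
            \sum_(p <- R) phi p.1 p.2.
    apply: eq_bigr => p _; rewrite (lin_sumZ (f := fun x => phi p.1 x)) ?Hcu1 //; lin.
  move=> ->; apply: eq_bigr => p _.
  rewrite /u (lin_sumZ (f := fun x => phi (p.1 * x) p.2)); last by lin.
  by congr (phi _ _); rewrite mulr_sumr; apply: eq_bigr => q _; rewrite scalerAr.
have := A _ (fun x y => \sum_(t <- Ri) eps (t.2 * y) *: (t.1 * x)) ltac:(lin).
have E : forall v : H, \sum_(p <- R) \sum_(t <- Ri) eps (t.2 * p.2) *: (t.1 * p.1 * v) = v.
  move=> v.
  have := tmul_one HRiR (phi := fun x y => eps y *: (x * v)) ltac:(lin).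
  rewrite /= Heps1 scale1r mul1r => e.
  by rewrite -[X in _ = X]e exchange_big.
move=> Ai; rewrite -[LHS](E u) -[RHS](E 1).
under [RHS]eq_bigr => p _ do under eq_bigr => t _ do rewrite mulr1.
rewrite Ai; apply: eq_bigr => p _; apply: eq_bigr => t _; by rewrite mulrA.
Qed.

Lemma Hcop h : \sum_(p <- D h) p.2 * Si p.1 = eps h *: 1.
Proof.
apply: (can_inj HSiS); rewrite (linf_sum linS) (linfZ linS) S1 -Hant2.
by apply: eq_bigr => p _; rewrite Santi HSSi.
Qed.

Lemma F2 : teq2 [seq (S p.1, p.2) | p <- R] Ri.
Proof.
apply: (linv2 (B := R)) => // W phi bp.
rewrite sum_tmul big_map /tone big_seq1 /=.
have := @HR1 _ (fun x y z => phi (S x * y) z) ltac:(lin); rewrite !big_allpairs_dep /= => <-.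
transitivity (\sum_(p <- R) phi (\sum_(q <- D p.1) S q.1 * q.2) p.2).
  by apply: eq_bigr => p _; rewrite (linf_sum (f := fun x => phi x p.2)) //; lin.
under eq_bigr do rewrite Hant1.
rewrite (eq_bigr (fun p => eps p.1 *: phi 1 p.2)); last first.
  by move=> p _; rewrite (linfZ (f := fun x => phi x p.2)) //; lin.
by rewrite (lin_sumZ (f := fun x => phi 1 x)) ?F1 //; lin.
Qed.

Lemma F3 : teq2 [seq (p.1, Si p.2) | p <- R] Ri.
Proof.
apply: teq2_sym; apply: (linv2 (B := R)) => // W phi bp.
rewrite sum_tmul /tone big_seq1 /=.
under eq_bigr do rewrite big_map.
have := @HR2 _ (fun x y z => phi x (z * Si y)) ltac:(lin); rewrite !big_allpairs_dep /= => <-.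
transitivity (\sum_(p <- R) phi p.1 (\sum_(q <- D p.2) q.2 * Si q.1)).
  by apply: eq_bigr => p _; rewrite (linf_sum (f := fun x => phi p.1 x)) //; lin.
under eq_bigr do rewrite Hcop.
rewrite (eq_bigr (fun p => eps p.2 *: phi p.1 1)); last first.
  by move=> p _; rewrite (linfZ (f := fun x => phi p.1 x)) //; lin.
by rewrite (lin_sumZ (f := fun x => phi x 1)) ?F1' //; lin.
Qed.


Lemma F2E (W : lmodType k) (phi : H -> H -> W) : bilinear_map phi ->
  \sum_(t <- Ri) phi t.1 t.2 = \sum_(p <- R) phi (S p.1) p.2.
Proof. by move=> bp; rewrite -(F2 bp) big_map. Qed.

Lemma F3E (W : lmodType k) (phi : H -> H -> W) : bilinear_map phi ->
  \sum_(t <- Ri) phi t.1 t.2 = \sum_(p <- R) phi p.1 (Si p.2).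
Proof. by move=> bp; rewrite -(F3 bp) big_map. Qed.

Lemma Mone (W : lmodType k) (phi : H -> H -> W) : bilinear_map phi ->
  \sum_(s <- Ri) \sum_(t <- Ri) phi (s.1 * t.1) (S s.2 * t.2) = phi 1 1.
Proof.
move=> bp.
rewrite (F3E (phi := fun a b => \sum_(t <- Ri) phi (a * t.1) (S b * t.2))) /=; last by lin.
under eq_bigr do rewrite HSSi.
exact: (tmul_one HRRi bp).
Qed.

Lemma Mone' (W : lmodType k) (phi : H -> H -> W) : bilinear_map phi ->
  \sum_(t <- Ri) \sum_(s <- Ri) phi (t.2 * s.2) (S s.1 * t.1) = phi 1 1.
Proof.
move=> bp.
rewrite (F2E (phi := fun a b => \sum_(s <- Ri) phi (b * s.2) (S s.1 * a))) /=; last by lin.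
under eq_bigr do under eq_bigr do rewrite -Santi.
have := tmul_one HRRi (phi := fun a b => phi b (S a)) ltac:(lin).
by rewrite /= S1.
Qed.


Lemma big_ex (W : lmodType k) (I1 I2 : Type) (s1 : seq I1) (s2 : seq I2) (F : I1 -> I2 -> W) :
  \sum_(a <- s1) \sum_(b <- s2) F a b = \sum_(b <- s2) \sum_(a <- s1) F a b.
Proof. exact: exchange_big. Qed.

Lemma big_mv3 (W : lmodType k) (I1 I2 I3 : Type) (s1 : seq I1) (s2 : seq I2) (s3 : seq I3)
  (F : I1 -> I2 -> I3 -> W) :
  \sum_(a <- s1) \sum_(b <- s2) \sum_(c <- s3) F a b c =
  \sum_(b <- s2) \sum_(c <- s3) \sum_(a <- s1) F a b c.
Proof. by rewrite big_ex; apply: eq_bigr => b _; exact: big_ex. Qed.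

Lemma big_mv4 (W : lmodType k) (I1 I2 I3 I4 : Type) (s1 : seq I1) (s2 : seq I2) (s3 : seq I3)
  (s4 : seq I4) (F : I1 -> I2 -> I3 -> I4 -> W) :
  \sum_(a <- s1) \sum_(b <- s2) \sum_(c <- s3) \sum_(d <- s4) F a b c d =
  \sum_(b <- s2) \sum_(c <- s3) \sum_(d <- s4) \sum_(a <- s1) F a b c d.
Proof. by rewrite big_ex; apply: eq_bigr => b _; exact: big_mv3. Qed.

Lemma big_mv5 (W : lmodType k) (I1 I2 I3 I4 I5 : Type) (s1 : seq I1) (s2 : seq I2) (s3 : seq I3)
  (s4 : seq I4) (s5 : seq I5) (F : I1 -> I2 -> I3 -> I4 -> I5 -> W) :
  \sum_(a <- s1) \sum_(b <- s2) \sum_(c <- s3) \sum_(d <- s4) \sum_(e <- s5) F a b c d e =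
  \sum_(b <- s2) \sum_(c <- s3) \sum_(d <- s4) \sum_(e <- s5) \sum_(a <- s1) F a b c d e.
Proof. by rewrite big_ex; apply: eq_bigr => b _; exact: big_mv4. Qed.

Lemma nuE (R0 : tens2 H) h (W : lmodType k) (phi : H -> H -> W) :
  \sum_(p <- nu D S R0 h) phi p.1 p.2 = \sum_(p <- R0) \sum_(x <- D2 D h) \sum_(r <- R0)
     phi (p.2 * x.1.2 * r.2) (S x.1.1 * S p.1 * x.2 * r.1).
Proof. by rewrite big_allpairs_dep; apply: eq_bigr => p _; rewrite big_allpairs_dep. Qed.

Lemma nu'E (R0 : tens2 H) h (W : lmodType k) (phi : H -> H -> W) :
  \sum_(p <- nu' D S R0 h) phi p.1 p.2 = \sum_(p <- R0) \sum_(x <- D2 D h) \sum_(r <- R0)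
     phi (p.1 * x.1.2 * r.1) (S r.2 * S x.1.1 * p.2 * x.2).
Proof. by rewrite big_allpairs_dep; apply: eq_bigr => p _; rewrite big_allpairs_dep. Qed.

Lemma cswap (T : tens2 H) : in_H_tensor_Z T -> forall (W : lmodType k) (phi : H -> H -> W),
  bilinear_map phi -> forall y,
  \sum_(t <- T) phi t.1 (t.2 * y) = \sum_(t <- T) phi t.1 (y * t.2).
Proof.
move=> [s [cs hs]] W phi bp y.
rewrite (hs _ (fun a b => phi a (b * y))) /=; last by lin.
rewrite (hs _ (fun a b => phi a (y * b))) /=; last by lin.
by rewrite big_seq_cond [RHS]big_seq_cond; apply: eq_bigr => t /andP[ts _]; rewrite cs.
Qed.


Lemma Na h : in_H_tensor_Z (nu' D S R h) -> teq2 (nu D S (tflip Ri) h) (nu' D S R h).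
Proof.
move=> hT W phi bp; symmetry.
transitivity (\sum_(s <- Ri) \sum_(t <- Ri) \sum_(w <- nu' D S R h)
   phi (w.1 * (s.1 * t.1)) (w.2 * S s.2 * t.2)).
  rewrite -big_mv3; apply: eq_bigr => w _.
  have := Mone (phi := fun a b => phi (w.1 * a) (w.2 * b)) ltac:(lin).
  rewrite /= !mulr1 => <-.
  by apply: eq_bigr => s _; apply: eq_bigr => t _; rewrite [w.2 * _]mulrA.
transitivity (\sum_(s <- Ri) \sum_(t <- Ri) \sum_(w <- nu' D S R h)
   phi (w.1 * (s.1 * t.1)) (S s.2 * w.2 * t.2)).
  apply: eq_bigr => s _; apply: eq_bigr => t _.
  exact: (cswap hT (phi := fun a b => phi (a * (s.1 * t.1)) (b * t.2)) ltac:(lin) (S s.2)).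
transitivity (\sum_(s <- Ri) \sum_(t <- Ri) \sum_(p <- R) \sum_(x <- D2 D h) \sum_(r <- R)
   phi (p.1 * x.1.2 * r.1 * (s.1 * t.1)) (S s.2 * (S r.2 * S x.1.1 * p.2 * x.2) * t.2)).
  apply: eq_bigr => s _; apply: eq_bigr => t _.
  exact: (nu'E R h (fun a b => phi (a * (s.1 * t.1)) (S s.2 * b * t.2))).
transitivity (\sum_(t <- Ri) \sum_(p <- R) \sum_(x <- D2 D h) \sum_(r <- R) \sum_(s <- Ri)
   phi (p.1 * x.1.2 * (r.1 * s.1) * t.1) (S (r.2 * s.2) * S x.1.1 * p.2 * x.2 * t.2)).
  rewrite big_mv5; apply: eq_bigr => t _; apply: eq_bigr => p _; apply: eq_bigr => x _.
  by apply: eq_bigr => r _; apply: eq_bigr => s _; rewrite Santi !mulrA.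
transitivity (\sum_(t <- Ri) \sum_(p <- R) \sum_(x <- D2 D h)
   phi (p.1 * x.1.2 * t.1) (S x.1.1 * p.2 * x.2 * t.2)).
  apply: eq_bigr => t _; apply: eq_bigr => p _; apply: eq_bigr => x _.
  have := tmul_one HRRi (phi := fun a b =>
     phi (p.1 * x.1.2 * a * t.1) (S b * S x.1.1 * p.2 * x.2 * t.2)) ltac:(lin).
  by rewrite /= S1 mulr1 mul1r.
rewrite nuE /tflip !big_map /=.
under [RHS]eq_bigr => t _ do under eq_bigr => x _ do rewrite big_map.
rewrite (F3E (phi := fun a b => \sum_(x <- D2 D h) \sum_(r <- Ri)
   phi (a * x.1.2 * r.1) (S x.1.1 * S b * x.2 * r.2))) /=; last by lin.
rewrite big_mv3; apply: eq_bigr => p _; apply: eq_bigr => x _; apply: eq_bigr => t _.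
by rewrite HSSi.
Qed.


Lemma Nb h : in_H_tensor_Z (nu D S R h) -> teq2 (nu' D S (tflip Ri) h) (nu D S R h).
Proof.
move=> hT W phi bp; symmetry.
transitivity (\sum_(t <- Ri) \sum_(s <- Ri) \sum_(w <- nu D S R h)
   phi (w.1 * (t.2 * s.2)) (w.2 * S s.1 * t.1)).
  rewrite -big_mv3; apply: eq_bigr => w _.
  have := Mone' (phi := fun a b => phi (w.1 * a) (w.2 * b)) ltac:(lin).
  rewrite /= !mulr1 => <-.
  by apply: eq_bigr => t _; apply: eq_bigr => s _; rewrite [w.2 * _]mulrA.
transitivity (\sum_(t <- Ri) \sum_(s <- Ri) \sum_(w <- nu D S R h)
   phi (w.1 * (t.2 * s.2)) (S s.1 * w.2 * t.1)).
  apply: eq_bigr => t _; apply: eq_bigr => s _.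
  exact: (cswap hT (phi := fun a b => phi (a * (t.2 * s.2)) (b * t.1)) ltac:(lin) (S s.1)).
transitivity (\sum_(t <- Ri) \sum_(s <- Ri) \sum_(p <- R) \sum_(x <- D2 D h) \sum_(r <- R)
   phi (p.2 * x.1.2 * r.2 * (t.2 * s.2)) (S s.1 * (S x.1.1 * S p.1 * x.2 * r.1) * t.1)).
  apply: eq_bigr => t _; apply: eq_bigr => s _.
  exact: (nuE R h (fun a b => phi (a * (t.2 * s.2)) (S s.1 * b * t.1))).
transitivity (\sum_(s <- Ri) \sum_(p <- R) \sum_(x <- D2 D h) \sum_(r <- R) \sum_(t <- Ri)
   phi (p.2 * x.1.2 * (r.2 * t.2) * s.2) (S s.1 * S x.1.1 * S p.1 * x.2 * (r.1 * t.1))).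
  rewrite big_mv5; apply: eq_bigr => s _; apply: eq_bigr => p _; apply: eq_bigr => x _.
  by apply: eq_bigr => r _; apply: eq_bigr => t _; rewrite !mulrA.
transitivity (\sum_(s <- Ri) \sum_(p <- R) \sum_(x <- D2 D h)
   phi (p.2 * x.1.2 * s.2) (S s.1 * S x.1.1 * S p.1 * x.2)).
  apply: eq_bigr => s _; apply: eq_bigr => p _; apply: eq_bigr => x _.
  have := tmul_one HRRi (phi := fun a b =>
     phi (p.2 * x.1.2 * b * s.2) (S s.1 * S x.1.1 * S p.1 * x.2 * a)) ltac:(lin).
  by rewrite /= !mulr1.
rewrite nu'E /tflip !big_map /=.
under [RHS]eq_bigr => t _ do under eq_bigr => x _ do rewrite big_map.
rewrite (F2E (phi := fun a b => \sum_(x <- D2 D h) \sum_(r <- Ri)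
   phi (b * x.1.2 * r.2) (S r.1 * S x.1.1 * a * x.2))) /=; last by lin.
by rewrite big_mv3.
Qed.


Definition tmul3 (s t : tens3 H) : tens3 H :=
  [seq (p.1.1 * q.1.1, p.1.2 * q.1.2, p.2 * q.2) | p <- s, q <- t].
Definition tone3 : tens3 H := [:: (1, 1, 1)].

Lemma sum_tmul3 (W : lmodType k) (F : H -> H -> H -> W) s t :
  \sum_(w <- tmul3 s t) F w.1.1 w.1.2 w.2 =
  \sum_(p <- s) \sum_(q <- t) F (p.1.1 * q.1.1) (p.1.2 * q.1.2) (p.2 * q.2).
Proof. by rewrite /tmul3 big_allpairs_dep. Qed.

Lemma tmul3_one (A B : tens3 H) : teq3 (tmul3 A B) tone3 ->
  forall (W : lmodType k) (F : H -> H -> H -> W), trilinear_map F ->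
  \sum_(a <- A) \sum_(b <- B) F (a.1.1 * b.1.1) (a.1.2 * b.1.2) (a.2 * b.2) = F 1 1 1.
Proof. by move=> h W F tF; rewrite -sum_tmul3 (h _ _ tF) /tone3 big_seq1. Qed.

Lemma tmul3_eq (A B C E : tens3 H) : teq3 (tmul3 A B) (tmul3 C E) ->
  forall (W : lmodType k) (F : H -> H -> H -> W), trilinear_map F ->
  \sum_(a <- A) \sum_(b <- B) F (a.1.1 * b.1.1) (a.1.2 * b.1.2) (a.2 * b.2) =
  \sum_(a <- C) \sum_(b <- E) F (a.1.1 * b.1.1) (a.1.2 * b.1.2) (a.2 * b.2).
Proof. by move=> h W F tF; rewrite -!sum_tmul3 (h _ _ tF). Qed.

Lemma L4 (A A' B B' : tens3 H) : teq3 (tmul3 A A') tone3 -> teq3 (tmul3 B B') tone3 ->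
  forall (W : lmodType k) (F : H -> H -> H -> W), trilinear_map F ->
  \sum_(a <- A) \sum_(b <- B) \sum_(b2 <- B') \sum_(a2 <- A')
    F (a.1.1 * b.1.1 * b2.1.1 * a2.1.1) (a.1.2 * b.1.2 * b2.1.2 * a2.1.2)
      (a.2 * b.2 * b2.2 * a2.2) = F 1 1 1.
Proof.
move=> hA hB W F tF.
transitivity (\sum_(a <- A) \sum_(a2 <- A') F (a.1.1 * a2.1.1) (a.1.2 * a2.1.2) (a.2 * a2.2)).
  apply: eq_bigr => a _; rewrite -big_mv3; apply: eq_bigr => a2 _.
  have := tmul3_one hB (F := fun x y z =>
     F (a.1.1 * x * a2.1.1) (a.1.2 * y * a2.1.2) (a.2 * z * a2.2)) ltac:(lin).
  rewrite /= !mulr1 => <-.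
  by apply: eq_bigr => b _; apply: eq_bigr => b2 _; rewrite !mulrA.
exact: (tmul3_one hA tF).
Qed.

Lemma GL (A B C A' B' C' : tens3 H) :
  teq3 (tmul3 A B) (tmul3 B C) -> teq3 (tmul3 A A') tone3 -> teq3 (tmul3 B B') tone3 ->
  teq3 (tmul3 B' B) tone3 -> teq3 (tmul3 C' C) tone3 ->
  teq3 (tmul3 C' B') (tmul3 B' A').
Proof.
move=> hABC hAA hBB hBB' hCC W F tF.
rewrite !sum_tmul3.
transitivity (\sum_(c' <- C') \sum_(b' <- B') \sum_(a <- A) \sum_(b <- B) \sum_(b2 <- B')
   \sum_(a2 <- A')
   F (c'.1.1 * b'.1.1 * (a.1.1 * b.1.1) * b2.1.1 * a2.1.1)
     (c'.1.2 * b'.1.2 * (a.1.2 * b.1.2) * b2.1.2 * a2.1.2)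
     (c'.2 * b'.2 * (a.2 * b.2) * b2.2 * a2.2)).
  apply: eq_bigr => c' _; apply: eq_bigr => b' _.
  have := L4 hAA hBB (F := fun x y z =>
     F (c'.1.1 * b'.1.1 * x) (c'.1.2 * b'.1.2 * y) (c'.2 * b'.2 * z)) ltac:(lin).
  rewrite /= !mulr1 => <-.
  apply: eq_bigr => a _; apply: eq_bigr => b _; apply: eq_bigr => b2 _; apply: eq_bigr => a2 _.
  by rewrite !mulrA.
transitivity (\sum_(c' <- C') \sum_(b' <- B') \sum_(b <- B) \sum_(c <- C) \sum_(b2 <- B')
   \sum_(a2 <- A')
   F (c'.1.1 * b'.1.1 * (b.1.1 * c.1.1) * b2.1.1 * a2.1.1)
     (c'.1.2 * b'.1.2 * (b.1.2 * c.1.2) * b2.1.2 * a2.1.2)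
     (c'.2 * b'.2 * (b.2 * c.2) * b2.2 * a2.2)).
  apply: eq_bigr => c' _; apply: eq_bigr => b' _.
  exact: (tmul3_eq hABC (F := fun x y z => \sum_(b2 <- B') \sum_(a2 <- A')
   F (c'.1.1 * b'.1.1 * x * b2.1.1 * a2.1.1)
     (c'.1.2 * b'.1.2 * y * b2.1.2 * a2.1.2)
     (c'.2 * b'.2 * z * b2.2 * a2.2)) ltac:(lin)).
transitivity (\sum_(b2 <- B') \sum_(a2 <- A') \sum_(c' <- C') \sum_(b' <- B') \sum_(b <- B)
   \sum_(c <- C)
   F (c'.1.1 * b'.1.1 * b.1.1 * c.1.1 * (b2.1.1 * a2.1.1))
     (c'.1.2 * b'.1.2 * b.1.2 * c.1.2 * (b2.1.2 * a2.1.2))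
     (c'.2 * b'.2 * b.2 * c.2 * (b2.2 * a2.2))).
  rewrite -big_mv5; apply: eq_bigr => b2 _.
  symmetry; etransitivity; first exact: big_mv5.
  apply: eq_bigr => c' _; apply: eq_bigr => b' _; apply: eq_bigr => b _; apply: eq_bigr => c _.
  by apply: eq_bigr => a2 _; rewrite !mulrA.
apply: eq_bigr => b2 _; apply: eq_bigr => a2 _.
have := L4 hCC hBB' (F := fun x y z =>
     F (x * (b2.1.1 * a2.1.1)) (y * (b2.1.2 * a2.1.2)) (z * (b2.2 * a2.2))) ltac:(lin).
by rewrite /= !mul1r.
Qed.

Lemma DD (s t : tens2 H) : teq2 (tmul s t) (tone H) ->
  forall (W : lmodType k) (G : H -> H -> H -> W), trilinear_map G ->
  \sum_(p <- s) \sum_(q <- D p.1) \sum_(r <- t) \sum_(q' <- D r.1)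
     G (q.1 * q'.1) (q.2 * q'.2) (p.2 * r.2) = G 1 1 1.
Proof.
move=> hst W G tG.
transitivity (\sum_(p <- s) \sum_(r <- t) \sum_(w <- D (p.1 * r.1)) G w.1 w.2 (p.2 * r.2)).
  apply: eq_bigr => p _; rewrite big_ex; apply: eq_bigr => r _.
  exact: (DmulE (psi := fun x y => G x y (p.2 * r.2)) ltac:(lin)).
have := tmul_one hst (phi := fun a b => \sum_(w <- D a) G w.1 w.2 b) ltac:(lin).
move=> ->.
have := @HD1 _ (fun x y => G x y 1) ltac:(lin).
by rewrite /tone big_seq1.
Qed.


Lemma GI (X Z Z' Y : tens3 H) : teq3 (tmul3 X Z) tone3 -> teq3 Z Z' ->
  teq3 (tmul3 Z' Y) tone3 -> teq3 X Y.
Proof.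
move=> hXZ hZ hZY W F tF.
transitivity (\sum_(x <- X) \sum_(z <- Z') \sum_(y <- Y)
   F (x.1.1 * (z.1.1 * y.1.1)) (x.1.2 * (z.1.2 * y.1.2)) (x.2 * (z.2 * y.2))).
  apply: eq_bigr => x _.
  have := tmul3_one hZY (F := fun a b c => F (x.1.1 * a) (x.1.2 * b) (x.2 * c)) ltac:(lin).
  by rewrite /= !mulr1 => ->.
transitivity (\sum_(x <- X) \sum_(z <- Z) \sum_(y <- Y)
   F (x.1.1 * z.1.1 * y.1.1) (x.1.2 * z.1.2 * y.1.2) (x.2 * z.2 * y.2)).
  apply: eq_bigr => x _.
  have := hZ _ (fun a b c => \sum_(y <- Y) F (x.1.1 * a * y.1.1) (x.1.2 * b * y.1.2) (x.2 * c * y.2))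
     ltac:(lin).
  move=> ->; apply: eq_bigr => z _; apply: eq_bigr => y _; by rewrite !mulrA.
rewrite -big_mv3; apply: eq_bigr => y _.
have := tmul3_one hXZ (F := fun a b c => F (a * y.1.1) (b * y.1.2) (c * y.2)) ltac:(lin).
by rewrite /= !mul1r => ->.
Qed.


Lemma flip_one (s t : tens2 H) : teq2 (tmul s t) (tone H) ->
  teq2 (tmul (tflip s) (tflip t)) (tone H).
Proof.
move=> h W phi bp; rewrite sum_tmul /tflip big_map /tone big_seq1 /=.
under eq_bigr do rewrite big_map /=.
exact: (tmul_one h (phi := fun x y => phi y x) ltac:(lin)).
Qed.

Lemma DDf (s t : tens2 H) : teq2 (tmul s t) (tone H) ->
  forall (W : lmodType k) (G : H -> H -> H -> W), trilinear_map G ->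
  \sum_(p <- s) \sum_(q <- D p.2) \sum_(r <- t) \sum_(q' <- D r.2)
     G (q.1 * q'.1) (q.2 * q'.2) (p.1 * r.1) = G 1 1 1.
Proof.
move=> h W G tG; have := DD (flip_one h) tG.
rewrite /tflip big_map /= => <-; apply: eq_bigr => p _; apply: eq_bigr => q _.
by rewrite big_map.
Qed.

Lemma Q1 : teq3 [seq (q.1, q.2, p.2) | p <- tflip Ri, q <- D p.1]
    [seq (p.1, q.1, p.2 * q.2) | p <- tflip Ri, q <- tflip Ri].
Proof.
have hXZ : teq3 (tmul3 [seq (p.1, q.1, q.2) | p <- Ri, q <- D p.2]
                       [seq (p.1, q.1, q.2) | p <- R, q <- D p.2]) tone3.
  move=> W F tF; rewrite sum_tmul3 /tone3 big_seq1 /= big_allpairs_dep.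
  under eq_bigr do under eq_bigr do rewrite big_allpairs_dep /=.
  exact: (DDf HRiR (G := fun x y z => F z x y) ltac:(lin)).
have hZY : teq3 (tmul3 [seq (p.1 * q.1, q.2, p.2) | p <- R, q <- R]
                       [seq (p.1 * q.1, p.2, q.2) | p <- Ri, q <- Ri]) tone3.
  move=> W F tF; rewrite sum_tmul3 /tone3 big_seq1 /= big_allpairs_dep.
  under eq_bigr do under eq_bigr do rewrite big_allpairs_dep /=.
  transitivity (\sum_(p <- R) \sum_(t' <- Ri) F (p.1 * t'.1) 1 (p.2 * t'.2)).
    apply: eq_bigr => p _.
    transitivity (\sum_(t' <- Ri) \sum_(p' <- R) \sum_(t <- Ri)
        F (p.1 * (p'.1 * t.1) * t'.1) (p'.2 * t.2) (p.2 * t'.2)).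
      symmetry; etransitivity; first exact: big_mv3.
      apply: eq_bigr => p' _; apply: eq_bigr => t _; apply: eq_bigr => t' _.
      by rewrite !mulrA.
    apply: eq_bigr => t' _.
    have := tmul_one HRRi (phi := fun x y => F (p.1 * x * t'.1) y (p.2 * t'.2)) ltac:(lin).
    by rewrite /= mulr1.
  exact: (tmul_one HRRi (phi := fun x y => F x 1 y) ltac:(lin)).
have hX := GI hXZ HR2 hZY.
move=> W F tF.
have := hX _ (fun x y z => F y z x) ltac:(lin).
rewrite !big_allpairs_dep /tflip /= big_map => e.
rewrite big_map /=; under [RHS]eq_bigr do rewrite big_map /=.
exact: e.
Qed.


Lemma Q2 : teq3 [seq (p.1, q.1, q.2) | p <- tflip Ri, q <- D p.2]
    [seq (p.1 * q.1, q.2, p.2) | p <- tflip Ri, q <- tflip Ri].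
Proof.
have hXZ : teq3 (tmul3 [seq (q.1, q.2, p.2) | p <- Ri, q <- D p.1]
                       [seq (q.1, q.2, p.2) | p <- R, q <- D p.1]) tone3.
  move=> W F tF; rewrite sum_tmul3 /tone3 big_seq1 /= big_allpairs_dep.
  under eq_bigr do under eq_bigr do rewrite big_allpairs_dep /=.
  exact: (DD HRiR tF).
have hZY : teq3 (tmul3 [seq (p.1, q.1, p.2 * q.2) | p <- R, q <- R]
                       [seq (q.1, p.1, p.2 * q.2) | p <- Ri, q <- Ri]) tone3.
  move=> W F tF; rewrite sum_tmul3 /tone3 big_seq1 /= big_allpairs_dep.
  under eq_bigr do under eq_bigr do rewrite big_allpairs_dep /=.
  transitivity (\sum_(p <- R) \sum_(t' <- Ri) F (p.1 * t'.1) 1 (p.2 * t'.2)).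
    apply: eq_bigr => p _.
    transitivity (\sum_(t' <- Ri) \sum_(p' <- R) \sum_(t <- Ri)
        F (p.1 * t'.1) (p'.1 * t.1) (p.2 * (p'.2 * t.2) * t'.2)).
      symmetry; etransitivity; first exact: big_mv3.
      apply: eq_bigr => p' _; apply: eq_bigr => t _; apply: eq_bigr => t' _.
      by rewrite !mulrA.
    apply: eq_bigr => t' _.
    have := tmul_one HRRi (phi := fun x y => F (p.1 * t'.1) x (p.2 * y * t'.2)) ltac:(lin).
    by rewrite /= mulr1.
  exact: (tmul_one HRRi (phi := fun x y => F x 1 y) ltac:(lin)).
have hX := GI hXZ HR1 hZY.
move=> W F tF.
have := hX _ (fun x y z => F z x y) ltac:(lin).
rewrite !big_allpairs_dep /tflip /= big_map => e.
rewrite big_map /=; under [RHS]eq_bigr do rewrite big_map /=.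
exact: e.
Qed.


Lemma sum_qr (W : lmodType k) (I1 : Type) (s : seq I1) (g : I1 -> tens2 H) (t : tens2 H)
  (f : I1 -> (H * H) * (H * H) -> H * H * H) (F : H * H * H -> W) :
  \sum_(w <- [seq f p qr | p <- s, qr <- [seq (q, r) | q <- g p, r <- t]]) F w =
  \sum_(p <- s) \sum_(q <- g p) \sum_(r <- t) F (f p (q, r)).
Proof.
rewrite big_allpairs_dep; apply: eq_bigr => p _.
by rewrite big_allpairs_dep.
Qed.

Lemma Q3 : teq3 [seq (p.1, qr.1.2 * qr.2.1, qr.1.1 * qr.2.2)
          | p <- tflip Ri, qr <- [seq (q, r) | q <- D p.2, r <- tflip Ri]]
       [seq (p.1, qr.2.1 * qr.1.1, qr.2.2 * qr.1.2)
          | p <- tflip Ri, qr <- [seq (q, r) | q <- D p.2, r <- tflip Ri]].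
Proof.
pose A3 : tens3 H := [seq (q.2, q.1, p.2) | p <- R, q <- D p.1].
pose B3 : tens3 H := [seq (p.1, p.2, 1 : H) | p <- R].
pose C3 : tens3 H := [seq (q.1, q.2, p.2) | p <- R, q <- D p.1].
pose A3' : tens3 H := [seq (q.2, q.1, p.2) | p <- Ri, q <- D p.1].
pose B3' : tens3 H := [seq (p.1, p.2, 1 : H) | p <- Ri].
pose C3' : tens3 H := [seq (q.1, q.2, p.2) | p <- Ri, q <- D p.1].
have hABC : teq3 (tmul3 A3 B3) (tmul3 B3 C3).
  move=> W F tF; rewrite !sum_tmul3 /A3 /B3 /C3 [LHS]big_allpairs_dep [RHS]big_map /=.
  under [LHS]eq_bigr do under eq_bigr do rewrite big_map /=.
  under [RHS]eq_bigr do rewrite big_allpairs_dep /=.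
  have e := @HR4 _ F tF; rewrite !sum_qr /= in e.
  transitivity (\sum_(p <- R) \sum_(q <- D p.1) \sum_(r <- R) F (q.2 * r.1) (q.1 * r.2) p.2).
    by apply: eq_bigr => p _; apply: eq_bigr => q _; apply: eq_bigr => r _; rewrite mulr1.
  rewrite e big_ex; apply: eq_bigr => p _; rewrite big_ex; apply: eq_bigr => q _.
  by apply: eq_bigr => r _; rewrite mul1r.
have hAA : teq3 (tmul3 A3 A3') tone3.
  move=> W F tF; rewrite sum_tmul3 /tone3 big_seq1 /= /A3 /A3' big_allpairs_dep.
  under eq_bigr do under eq_bigr do rewrite big_allpairs_dep /=.
  exact: (DD HRRi (G := fun x y z => F y x z) ltac:(lin)).
have hBB : teq3 (tmul3 B3 B3') tone3.
  move=> W F tF; rewrite sum_tmul3 /tone3 big_seq1 /= /B3 /B3' big_map /=.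
  under eq_bigr do rewrite big_map /=.
  have := tmul_one HRRi (phi := fun x y => F x y (1 * 1)) ltac:(lin).
  by rewrite /= mulr1.
have hBB' : teq3 (tmul3 B3' B3) tone3.
  move=> W F tF; rewrite sum_tmul3 /tone3 big_seq1 /= /B3 /B3' big_map /=.
  under eq_bigr do rewrite big_map /=.
  have := tmul_one HRiR (phi := fun x y => F x y (1 * 1)) ltac:(lin).
  by rewrite /= mulr1.
have hCC : teq3 (tmul3 C3' C3) tone3.
  move=> W F tF; rewrite sum_tmul3 /tone3 big_seq1 /= /C3 /C3' big_allpairs_dep.
  under eq_bigr do under eq_bigr do rewrite big_allpairs_dep /=.
  exact: (DD HRiR tF).
have hG := GL hABC hAA hBB hBB' hCC.
move=> W F tF.
have e := tmul3_eq hG (F := fun x y z => F z y x) ltac:(lin).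
rewrite !sum_qr /tflip [LHS]big_map [RHS]big_map /=.
under [LHS]eq_bigr do under eq_bigr do rewrite big_map /=.
under [RHS]eq_bigr do under eq_bigr do rewrite big_map /=.
transitivity (\sum_(a <- C3') \sum_(b <- B3') F (a.2 * b.2) (a.1.2 * b.1.2) (a.1.1 * b.1.1)).
  rewrite /C3' /B3' [RHS]big_allpairs_dep /=.
  under [RHS]eq_bigr do under eq_bigr do rewrite big_map /=.
  by apply: eq_bigr => t _; apply: eq_bigr => q _; apply: eq_bigr => t' _; rewrite mulr1.
rewrite e /B3' /A3' [LHS]big_map /=.
under [LHS]eq_bigr do rewrite big_allpairs_dep /=.
rewrite big_ex; apply: eq_bigr => t _; rewrite big_ex; apply: eq_bigr => q _.
by apply: eq_bigr => t' _; rewrite mul1r.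
Qed.

Lemma Q4 : teq3 [seq (qr.1.2 * qr.2.1, qr.1.1 * qr.2.2, p.2)
          | p <- tflip Ri, qr <- [seq (q, r) | q <- D p.1, r <- tflip Ri]]
       [seq (qr.2.1 * qr.1.1, qr.2.2 * qr.1.2, p.2)
          | p <- tflip Ri, qr <- [seq (q, r) | q <- D p.1, r <- tflip Ri]].
Proof.
pose A3 : tens3 H := [seq (p.1, q.2, q.1) | p <- R, q <- D p.2].
pose B3 : tens3 H := [seq (1 : H, p.1, p.2) | p <- R].
pose C3 : tens3 H := [seq (p.1, q.1, q.2) | p <- R, q <- D p.2].
pose A3' : tens3 H := [seq (p.1, q.2, q.1) | p <- Ri, q <- D p.2].
pose B3' : tens3 H := [seq (1 : H, p.1, p.2) | p <- Ri].
pose C3' : tens3 H := [seq (p.1, q.1, q.2) | p <- Ri, q <- D p.2].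
have hABC : teq3 (tmul3 A3 B3) (tmul3 B3 C3).
  move=> W F tF; rewrite !sum_tmul3 /A3 /B3 /C3 [LHS]big_allpairs_dep [RHS]big_map /=.
  under [LHS]eq_bigr do under eq_bigr do rewrite big_map /=.
  under [RHS]eq_bigr do rewrite big_allpairs_dep /=.
  have e := @HR3 _ F tF; rewrite !sum_qr /= in e.
  transitivity (\sum_(p <- R) \sum_(q <- D p.2) \sum_(r <- R) F p.1 (q.2 * r.1) (q.1 * r.2)).
    by apply: eq_bigr => p _; apply: eq_bigr => q _; apply: eq_bigr => r _; rewrite mulr1.
  rewrite e big_ex; apply: eq_bigr => p _; rewrite big_ex; apply: eq_bigr => q _.
  by apply: eq_bigr => r _; rewrite mul1r.
have hAA : teq3 (tmul3 A3 A3') tone3.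
  move=> W F tF; rewrite sum_tmul3 /tone3 big_seq1 /= /A3 /A3' big_allpairs_dep.
  under eq_bigr do under eq_bigr do rewrite big_allpairs_dep /=.
  exact: (DDf HRRi (G := fun x y z => F z y x) ltac:(lin)).
have hBB : teq3 (tmul3 B3 B3') tone3.
  move=> W F tF; rewrite sum_tmul3 /tone3 big_seq1 /= /B3 /B3' big_map /=.
  under eq_bigr do rewrite big_map /=.
  have := tmul_one HRRi (phi := fun x y => F (1 * 1) x y) ltac:(lin).
  by rewrite /= mulr1.
have hBB' : teq3 (tmul3 B3' B3) tone3.
  move=> W F tF; rewrite sum_tmul3 /tone3 big_seq1 /= /B3 /B3' big_map /=.
  under eq_bigr do rewrite big_map /=.
  have := tmul_one HRiR (phi := fun x y => F (1 * 1) x y) ltac:(lin).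
  by rewrite /= mulr1.
have hCC : teq3 (tmul3 C3' C3) tone3.
  move=> W F tF; rewrite sum_tmul3 /tone3 big_seq1 /= /C3 /C3' big_allpairs_dep.
  under eq_bigr do under eq_bigr do rewrite big_allpairs_dep /=.
  exact: (DDf HRiR (G := fun x y z => F z x y) ltac:(lin)).
have hG := GL hABC hAA hBB hBB' hCC.
move=> W F tF.
have e := tmul3_eq hG (F := fun x y z => F z y x) ltac:(lin).
rewrite !sum_qr /tflip [LHS]big_map [RHS]big_map /=.
under [LHS]eq_bigr do under eq_bigr do rewrite big_map /=.
under [RHS]eq_bigr do under eq_bigr do rewrite big_map /=.
transitivity (\sum_(a <- C3') \sum_(b <- B3') F (a.2 * b.2) (a.1.2 * b.1.2) (a.1.1 * b.1.1)).
  rewrite /C3' /B3' [RHS]big_allpairs_dep /=.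
  under [RHS]eq_bigr do under eq_bigr do rewrite big_map /=.
  by apply: eq_bigr => t _; apply: eq_bigr => q _; apply: eq_bigr => t' _; rewrite mulr1.
rewrite e /B3' /A3' [LHS]big_map /=.
under [LHS]eq_bigr do rewrite big_allpairs_dep /=.
rewrite big_ex; apply: eq_bigr => t _; rewrite big_ex; apply: eq_bigr => q _.
by apply: eq_bigr => t' _; rewrite mul1r.
Qed.


Hypothesis HR5 : forall h : H, in_H_tensor_Z (nu D S R h).
Hypothesis HR6 : forall h : H, teq2 (nu D S R h) (nu' D S R h).

Lemma main_sec : semiquasitriangular D S (tflip Ri).
Proof.
split; first by exists (tflip R); split; apply: flip_one.
split; first exact: Q1.
split; first exact: Q2.
split; first exact: Q3.
split; first exact: Q4.
have hT' : forall h, in_H_tensor_Z (nu' D S R h).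
  move=> h; have [s [cs hs]] := HR5 h.
  by exists s; split => //; apply: teq2_trans (teq2_sym (HR6 h)) hs.
split.
  move=> h; have [s [cs hs]] := HR5 h.
  exists s; split => //.
  exact: teq2_trans (Na (hT' h)) (teq2_trans (teq2_sym (HR6 h)) hs).
move=> h.
exact: teq2_trans (Na (hT' h)) (teq2_trans (teq2_sym (HR6 h)) (teq2_sym (Nb (HR5 h)))).
Qed.

End Main.


Unset Implicit Arguments.

Theorem proposition1p10 (k : fieldType) (H : algType k)
  (D : H -> tens2 H) (eps : H -> k) (S : H -> H)
  (hopfH : is_hopf D eps S) (bijS : bijective S)
  (R Rinv : tens2 H)
  (HRRinv : teq2 (tmul R Rinv) (tone H)) (HRinvR : teq2 (tmul Rinv R) (tone H))
  (semiR : semiquasitriangular D S R) :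
  semiquasitriangular D S (tflip Rinv).
Proof.
case: hopfH => HDlin [Hcoass [Hcu [HDmul [HD1 [[Heps_lin Heps_mul Heps1] [HSlin Hant]]]]]].
case: bijS => Si HSiS HSSi.
case: semiR => _ [HR1 [HR2 [HR3 [HR4 [HR5 HR6]]]]].
exact: (main_sec HDlin Hcoass (fun h => (Hcu h).1) (fun h => (Hcu h).2) HDmul HD1
  Heps_lin Heps_mul Heps1 HSlin (fun h => (Hant h).1) (fun h => (Hant h).2) HSSi HSiS
  HRRinv HRinvR HR1 HR3 HR4 HR2 HR5 HR6).
Qed.
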